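(* Let $G$ be an abelian Hausdorff topological group in which every cyclic subgroup is discrete. The following are equivalent: (i) $G$ contains an infinite absolutely summable set; (ii) $G$ contains a subgroup topologically isomorphic to $P_B$ for some infinite subset $B$ of $G$. Furthermore, if $G$ is complete, these are also equivalent to: (iii) $G$ contains an infinite absolutely Cauchy summable set.
   Context: For $a\in G$, $\langle a\rangle$ is the cyclic subgroup generated by $a$ with the subspace topology, and $P_B=\prod_{b\in B}\langle b\rangle$ carries the Tychonoff product topology. $A\subseteq G$ is absolutely summable if for every family $\{z_a:a\in A\}$ of integers there is $g\in G$ such that for every neighbourhood $U$ of $0$ there is a finite $F\subseteq A$ with $g-\sum_{a\in E}z_aa\in U$ for every finite $E\subseteq A$ containing $F$. $A$ is absolutely Cauchy summable if for every neighbourhood $U$ of $0$ there is a finite $F\subseteq A$ such that the subgroup generated by $A\setminus F$ is contained in $U$. *)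

(* Defs.v *)
From HB Require Import structures.
From mathcomp Require Import all_boot all_order all_algebra.
From mathcomp Require Import all_classical all_reals all_analysis.
Set Implicit Arguments. Unset Strict Implicit. Unset Printing Implicit Defensive.
Import Order.TTheory GRing.Theory Num.Theory.
Local Open Scope classical_set_scope.
Local Open Scope ring_scope.

Section Defs.
Variable G : topologicalZmodType.

Definition cyclic_sub (a : G) : set G := [set a *~ n | n in [set: int]].

Definition discrete_subset (S : set G) : Prop :=
  forall x, S x -> exists U : set G, open U /\ U `&` S = [set x].

Definition cyclic_subgroups_discrete : Prop :=
  forall a : G, discrete_subset (cyclic_sub a).

Definition abs_summable (A : set G) : Prop :=
  forall z : G -> int, exists g : G,
    forall U : set G, nbhs (0 : G) U ->
      exists F : set G, [/\ finite_set F, F `<=` A &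
        forall E : set G, finite_set E -> F `<=` E -> E `<=` A ->
          U (g - \sum_(a \in E) a *~ z a)].

Definition is_subgroup (H : set G) : Prop :=
  H 0 /\ (forall x y, H x -> H y -> H (x - y)).

Definition gen_subgroup (S : set G) : set G :=
  [set x | forall H : set G, is_subgroup H -> S `<=` H -> H x].

Definition abs_cauchy_summable (A : set G) : Prop :=
  forall U : set G, nbhs (0 : G) U ->
    exists F : set G, [/\ finite_set F, F `<=` A & gen_subgroup (A `\` F) `<=` U].

(* Cauchy filters for the (unique, G abelian) group uniformity *)
Definition group_cauchy (F : set_system G) : Prop :=
  forall U : set G, nbhs (0 : G) U ->
    exists A : set G, F A /\ (forall x y, A x -> A y -> U (x - y)).

Definition group_complete : Prop :=
  forall F : set_system G, ProperFilter F -> group_cauchy F -> exists l : G, F --> l.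

(* P_B, realised as the set of maps f : G -> G with f b in <b> for b in B
   and f x = 0 off B; it carries the subspace topology of the product
   (Tychonoff = pointwise) topology {ptws G -> G}. *)
Definition PB (B : set G) : set {ptws G -> G} :=
  [set f | (forall b, B b -> cyclic_sub b (f b)) /\ (forall x, ~ B x -> f x = 0)].

(* G contains a subgroup topologically isomorphic to P_B: phi is an
   injective group homomorphism on P_B which is a homeomorphism of P_B onto
   its image phi @` P_B (a subgroup of G, with the subspace topology). *)
Definition top_iso_onto_subgroup (B : set G) (phi : {ptws G -> G} -> G) : Prop :=
  [/\ (forall f g, PB B f -> PB B g -> phi (f \+ g) = phi f + phi g),
      (forall f g, PB B f -> PB B g -> phi f = phi g -> f = g),
      {within PB B, continuous phi} &
      exists psi : G -> {ptws G -> G},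
        (forall f, PB B f -> psi (phi f) = f) /\
        {within phi @` PB B, continuous psi}].
End Defs.

(* Main.v *)
Require Import Defs.
From HB Require Import structures.
From mathcomp Require Import all_boot all_order all_algebra.
From mathcomp Require Import all_classical all_reals all_analysis.
Import Order.TTheory GRing.Theory Num.Theory.
Local Open Scope classical_set_scope.
Local Open Scope ring_scope.
Set Implicit Arguments. Unset Strict Implicit.

Section Basic.
Variable G : topologicalZmodType.

Lemma addl_cont (x : G) : continuous (fun d : G => x + d).
Proof.
move=> d; apply: (@continuous_comp _ _ _ (fun d => (x, d)) (fun p : G * G => p.1 + p.2)).
  by apply: cvg_pair; [exact: cvg_cst | exact: cvg_id].
exact: add_continuous.
Qed.

Lemma subl_cont (x : G) : continuous (fun d : G => x - d).
Proof.
move=> d; apply: (@continuous_comp _ _ _ (fun d => (x, d)) (fun p : G * G => p.1 - p.2)).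
  by apply: cvg_pair; [exact: cvg_cst | exact: cvg_id].
exact: sub_continuous.
Qed.

Lemma subr_cont (x : G) : continuous (fun d : G => d - x).
Proof.
move=> d; apply: (@continuous_comp _ _ _ (fun d => (d, x)) (fun p : G * G => p.1 - p.2)).
  by apply: cvg_pair; [exact: cvg_id | exact: cvg_cst].
exact: sub_continuous.
Qed.

Lemma nbhs_trans0 (x : G) (U : set G) : nbhs x U -> nbhs (0:G) (fun d => U (x + d)).
Proof. by move=> Ux; apply: (@addl_cont x 0); rewrite /= addr0. Qed.

Lemma nbhs_trans0' (x : G) (U : set G) : nbhs x U -> nbhs (0:G) (fun d => U (x - d)).
Proof. by move=> Ux; apply: (@subl_cont x 0); rewrite /= subr0. Qed.

Lemma nbhs_transx (x : G) (U : set G) : nbhs (0:G) U -> nbhs x (fun y => U (y - x)).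
Proof. by move=> U0; apply: (@subr_cont x x); rewrite /= subrr. Qed.

Lemma nbhs0_sub (U : set G) : nbhs (0:G) U ->
  exists V : set G, nbhs (0:G) V /\ forall x y, V x -> V y -> U (x - y).
Proof.
move=> U0.
have : nbhs ((0:G), (0:G)) ((fun p : G * G => p.1 - p.2) @^-1` U).
  by apply: (@sub_continuous G (0,0)); rewrite /= subr0.
move=> [[A B] /= [nA nB] AB].
exists (A `&` B); split; first exact: filterI.
by move=> x y [Ax _] [_ By]; apply: (AB (x, y)).
Qed.

Lemma nbhs0_add (U : set G) : nbhs (0:G) U ->
  exists V : set G, nbhs (0:G) V /\ forall x y, V x -> V y -> U (x + y).
Proof.
move=> U0.
have : nbhs ((0:G), (0:G)) ((fun p : G * G => p.1 + p.2) @^-1` U).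
  by apply: (@add_continuous G (0,0)); rewrite /= addr0.
move=> [[A B] /= [nA nB] AB].
exists (A `&` B); split; first exact: filterI.
by move=> x y [Ax _] [_ By]; apply: (AB (x, y)).
Qed.

Lemma nbhs0_opp (U : set G) : nbhs (0:G) U -> nbhs (0:G) (fun x => U (- x)).
Proof. by move=> U0; apply: (@opp_continuous G 0); rewrite /= oppr0. Qed.


Lemma subKr' (x y : G) : x - (x - y) = y.
Proof. by rewrite opprB addrC subrK. Qed.

Definition sumsA (A : set G) (w : G -> G) (g : G) :=
  forall U : set G, nbhs (0:G) U -> exists F : set G, [/\ finite_set F, F `<=` A &
    forall E : set G, finite_set E -> F `<=` E -> E `<=` A -> U (g - \sum_(a \in E) w a)].

Lemma sumsA_uniq (A : set G) w g1 g2 : hausdorff_space G ->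
  sumsA A w g1 -> sumsA A w g2 -> g1 = g2.
Proof.
move=> hG s1 s2; apply: hG => P Q nP nQ.
have [F1 [f1 F1A H1]] := s1 _ (nbhs_trans0' nP).
have [F2 [f2 F2A H2]] := s2 _ (nbhs_trans0' nQ).
have fE : finite_set (F1 `|` F2) by rewrite finite_setU.
have EA : F1 `|` F2 `<=` A by move=> x [/F1A|/F2A].
exists (\sum_(a \in F1 `|` F2) w a); split.
  by have := H1 _ fE (@subsetUl _ F1 F2) EA; rewrite subKr'.
by have := H2 _ fE (@subsetUr _ F1 F2) EA; rewrite subKr'.
Qed.

Lemma sumsA_ext (A : set G) w1 w2 g : (forall a, A a -> w1 a = w2 a) ->
  sumsA A w1 g -> sumsA A w2 g.
Proof.
move=> e s U U0; have [F [fF FA H]] := s U U0; exists F; split => // E fE FE EA.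
rewrite (eq_fsbigr w1); first exact: H.
by move=> x /set_mem /EA /e ->.
Qed.

Lemma sumsA_add (A : set G) w1 w2 g1 g2 :
  sumsA A w1 g1 -> sumsA A w2 g2 -> sumsA A (fun a => w1 a + w2 a) (g1 + g2).
Proof.
move=> s1 s2 U U0; have [V [V0 HV]] := nbhs0_add U0.
have [F1 [f1 F1A H1]] := s1 _ V0; have [F2 [f2 F2A H2]] := s2 _ V0.
exists (F1 `|` F2); split.
- by rewrite finite_setU.
- by move=> x [/F1A|/F2A].
move=> E fE FE EA; rewrite fsbig_split //.
have -> : g1 + g2 - (\sum_(a \in E) w1 a + \sum_(a \in E) w2 a) =
  (g1 - \sum_(a \in E) w1 a) + (g2 - \sum_(a \in E) w2 a).
  by rewrite opprD addrACA.
apply: HV; [apply: H1 | apply: H2] => //; apply: subset_trans FE.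
  exact: subsetUl.
exact: subsetUr.
Qed.

Lemma sumsA0 (A : set G) : sumsA A (fun _ => 0) 0.
Proof.
move=> U U0; exists set0; split => //.
move=> E _ _ _; rewrite fsbig1 // subrr; exact: nbhs_singleton.
Qed.


Section Subgroups.
Variable H : set G.
Hypothesis sH : is_subgroup H.

Lemma sg0 : H 0. Proof. by case: sH. Qed.
Lemma sgB x y : H x -> H y -> H (x - y). Proof. by case: sH => _; apply. Qed.
Lemma sgN x : H x -> H (- x).
Proof. by move=> Hx; rewrite -sub0r; apply: sgB => //; exact: sg0. Qed.
Lemma sgD x y : H x -> H y -> H (x + y).
Proof. by move=> Hx Hy; rewrite -(opprK y); apply: sgB => //; exact: sgN. Qed.
Lemma sgMn x k : H x -> H (x *+ k).
Proof. move=> Hx; elim: k => [|k IH]; first by rewrite mulr0n; exact: sg0.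
rewrite mulrS; exact: sgD. Qed.
Lemma sgMz x (n : int) : H x -> H (x *~ n).
Proof.
move=> Hx; case: n => k; first exact: sgMn.
by rewrite NegzE mulrNz; apply: sgN; apply: sgMn.
Qed.
Lemma sg_sum (E : set G) (w : G -> G) : finite_set E ->
  (forall a, E a -> H (w a)) -> H (\sum_(a \in E) w a).
Proof.
move=> fE Hw; rewrite fsbig_finite // big_seq; apply: big_ind => //.
- exact: sg0.
- exact: sgD.
by move=> i; rewrite in_fset_set // inE => /Hw.
Qed.
End Subgroups.

Lemma gen_is_subgroup (S : set G) : is_subgroup (gen_subgroup S).
Proof.
split; first by move=> H [].
by move=> x y Hx Hy H sH SH; apply: sgB => //; [apply: Hx|apply: Hy].
Qed.

Lemma gen_sub (S : set G) : S `<=` gen_subgroup S.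
Proof. by move=> x Sx H _; apply. Qed.

Lemma gen_mono (S T : set G) : S `<=` T -> gen_subgroup S `<=` gen_subgroup T.
Proof. by move=> ST x Sx H sH TH; apply: Sx => //; apply: subset_trans TH. Qed.

Lemma cyc_subgroup (b : G) : is_subgroup (cyclic_sub b).
Proof.
split; first by exists 0 => //; rewrite mulr0z.
move=> x y [n _ <-] [m _ <-]; exists (n - m) => //; by rewrite mulrzBr.
Qed.

Lemma cyc_in_gen (S : set G) b x : S b -> cyclic_sub b x -> gen_subgroup S x.
Proof. by move=> Sb [n _ <-]; apply: (sgMz (gen_is_subgroup S)); exact: gen_sub. Qed.


Lemma nbhs_transl (x : G) (U : set G) : nbhs (0:G) U -> nbhs x (fun y => U (x - y)).
Proof. by move=> U0; apply: (@subl_cont x x); rewrite /= subrr. Qed.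

Lemma diff_in_gen (A F E : set G) (w : G -> G) :
  (forall a, A a -> cyclic_sub a (w a)) ->
  finite_set E -> F `<=` E -> E `<=` A ->
  gen_subgroup (A `\` F) (\sum_(a \in E) w a - \sum_(a \in F) w a).
Proof.
move=> cw fE FE EA; rewrite (fsbigID F) // (setIidr FE) addrAC subrr add0r.
apply: sg_sum; first exact: gen_is_subgroup.
  exact: finite_setIl.
move=> a [Ea nFa]; apply: (@cyc_in_gen _ a); last by apply: cw; apply: EA.
by split => //; apply: EA.
Qed.

Lemma cauchy_to_summable (A : set G) : group_complete G ->
  abs_cauchy_summable A -> abs_summable A.
Proof.
move=> cG cA z.
pose w := fun a : G => a *~ z a.
pose s := fun E : set G => \sum_(a \in E) w a.
have cw : forall a, A a -> cyclic_sub a (w a) by move=> a _; exists (z a).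
pose D := [set F : set G | finite_set F /\ F `<=` A].
pose B := fun F : set G => [set x | exists E, [/\ finite_set E, F `<=` E, E `<=` A & x = s E]].
have FF : Filter (filter_from D B).
  apply: filter_from_filter; first by exists set0; split => //.
  move=> F1 F2 [f1 A1] [f2 A2]; exists (F1 `|` F2).
    by split; [rewrite finite_setU|move=> x [/A1|/A2]].
  move=> x [E [fE FE EA ->]]; split; exists E; split => //.
    by apply: subset_trans FE; exact: subsetUl.
  by apply: subset_trans FE; exact: subsetUr.
have PF : ProperFilter (filter_from D B).
  apply: (@filter_from_proper _ _ D B FF) => F [fF FA]; exists (s F); exists F; split => //.
have [l Fl] : exists l : G, filter_from D B --> l.
  apply: (cG _ PF) => U U0.
  have [F [fF FA HF]] := cA U U0.
  exists (B F); split; first by exists F.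
  move=> x y [E [fE FE EA ->]] [E' [fE' FE' EA' ->]]; apply: HF.
  have -> : s E - s E' = (s E - s F) - (s E' - s F) by rewrite opprB addrA subrK.
  apply: (sgB (gen_is_subgroup _)).
    exact: diff_in_gen.
  exact: diff_in_gen.
exists l => U U0.
have := Fl _ (nbhs_transl l U0); move=> [F [fF FA] BF].
exists F; split => // E fE FE EA; apply: (BF (s E)); exists E; split => //.
Qed.


Lemma fsbigB (E : set G) (f g : G -> G) : finite_set E ->
  \sum_(a \in E) (f a - g a) = \sum_(a \in E) f a - \sum_(a \in E) g a.
Proof. by move=> fE; rewrite !fsbig_finite // sumrB. Qed.

Definition combo (S : set G) (x : G) := exists E (n : G -> int),
  [/\ finite_set E, E `<=` S, (forall a, ~ E a -> n a = 0) &
      x = \sum_(a \in E) a *~ n a].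

Lemma combo_widen (E E' : set G) (n : G -> int) : E `<=` E' ->
  (forall a, ~ E a -> n a = 0) ->
  \sum_(a \in E) a *~ n a = \sum_(a \in E') a *~ n a.
Proof.
move=> EE' n0; apply: fsbig_widen => // a [_ nEa] /=.
by rewrite n0 // mulr0z.
Qed.

Lemma combo_subgroup (S : set G) : is_subgroup (combo S).
Proof.
split.
  exists set0, (fun _ => 0); split => //.
  by rewrite fsbig_set0.
move=> x y [E1 [n1 [f1 S1 z1 ->]]] [E2 [n2 [f2 S2 z2 ->]]].
exists (E1 `|` E2), (fun a => n1 a - n2 a); split.
- by rewrite finite_setU.
- by move=> a [/S1|/S2].
- by move=> a /not_orP [/z1 -> /z2 ->]; rewrite subr0.
under [in RHS]eq_fsbigr do rewrite mulrzBr.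
rewrite fsbigB; last by rewrite finite_setU.
by rewrite (combo_widen (@subsetUl _ E1 E2) z1) (combo_widen (@subsetUr _ E1 E2) z2).
Qed.

Lemma gen_combo (S : set G) : gen_subgroup S `<=` combo S.
Proof.
move=> x Hx; apply: Hx; first exact: combo_subgroup.
move=> a Sa; exists [set a], (fun b => if b == a then 1 else 0); split.
- exact: finite_set1.
- by move=> b ->.
- by move=> b nb; rewrite ifF //; apply/negP => /eqP.
by rewrite fsbig_set1 eqxx mulr1z.
Qed.

Lemma pigeon (F0 : set G) (f : nat -> G) : finite_set F0 ->
  (forall k, F0 (f k)) -> injective f -> False.
Proof.
move=> fF Ff inj.
have : finite_set (f @` [set: nat]).
  by apply: (sub_finite_set _ fF) => _ [k _ <-].
rewrite (eq_finite_set (@inj_card_eq _ _ [set: nat] f _)); first exact: infinite_nat.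
by move=> x y _ _ /inj.
Qed.


Lemma subsub3 (g s t : G) : (g - s) - (g - (s + t)) = t.
Proof. by rewrite opprB addrC addrA subrK addrC addKr. Qed.

Lemma summable_to_cauchy (A : set G) : abs_summable A -> abs_cauchy_summable A.
Proof.
move=> sA U U0.
have [V [V0 HV]] := nbhs0_sub U0.
apply: contrapT => nH.
have bad : forall F : set G, exists p : set G * (G -> int),
    finite_set F /\ F `<=` A -> [/\ finite_set p.1, p.1 `<=` A `\` F,
      (forall a, ~ p.1 a -> p.2 a = 0) & ~ U (\sum_(a \in p.1) a *~ p.2 a)].
  move=> F; case: (pselect (finite_set F /\ F `<=` A)); last first.
    by move=> nF; exists (set0, fun _ => 0).
  move=> [fF FA].
  have : ~ (gen_subgroup (A `\` F) `<=` U) by move=> h; apply: nH; exists F; split.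
  move=> /existsNP [x /not_implyP [gx nUx]].
  have [E [n [fE ES z0 ex]]] := gen_combo gx.
  by exists (E, n) => _; split => //; rewrite -ex.
have [pk Hpk] := choice bad.
pose cum := fix cum (k : nat) : set G :=
  if k is k'.+1 then cum k' `|` (pk (cum k')).1 else set0.
pose E := fun k => (pk (cum k)).1.
pose n := fun k => (pk (cum k)).2.
have cumP : forall k, finite_set (cum k) /\ cum k `<=` A.
  elim => [|k [fk kA]] /=; first by split.
  have [fE EA _ _] := Hpk (cum k) (conj fk kA).
  split; first by rewrite finite_setU.
  by move=> x [/kA|/EA []].
have HE : forall k, [/\ finite_set (E k), E k `<=` A `\` cum k,
    (forall a, ~ E k a -> n k a = 0) & ~ U (\sum_(a \in E k) a *~ n k a)].
  by move=> k; apply: Hpk; apply: cumP.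
have cum_mono : forall j k, (j <= k)%N -> cum j `<=` cum k.
  move=> j k jk; rewrite -(subnK jk); elim: (k - j)%N => [|i IH] //.
  by rewrite addSn => x /IH; left.
have Ecum : forall k, E k `<=` cum k.+1 by move=> k x Ex; right.
have disj : forall j k a, E j a -> E k a -> j = k.
  move=> j k a Ej Ek; case: (ltngtP j k) => // jk.
    have [_ EkA _ _] := HE k; have [_ nc] := EkA a Ek; case: nc.
    by apply: (cum_mono j.+1 k jk); apply: Ecum.
  have [_ EjA _ _] := HE j; have [_ nc] := EjA a Ej; case: nc.
  by apply: (cum_mono k.+1 j jk); apply: Ecum.
pose z := fun a => if pselect (exists k, E k a) is left h then n (projT1 (cid h)) a else 0.
have zE : forall k a, E k a -> z a = n k a.
  move=> k a Eka; rewrite /z; case: pselect => [h|]; last by case; exists k.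
  by case: cid => k' /= Ek'; rewrite (disj _ _ _ Ek' Eka).
have [g sg] := sA z.
have [F0 [fF0 F0A HF0]] := sg V V0.
have [k Fk] : exists k, forall a, E k a -> ~ F0 a.
  apply: contrapT => /forallNP nk.
  have : forall k, exists a, E k a /\ F0 a.
    move=> k; have /existsNP [a /not_implyP [Eka /contrapT F0a]] := nk k.
    by exists a.
  move=> /choice [f Hf]; apply: (@pigeon F0 f fF0); first by move=> k; case: (Hf k).
  by move=> j k ejk; apply: (disj j k (f j)); [case: (Hf j)|rewrite ejk; case: (Hf k)].
have [fEk EkA Ekz Ekbad] := HE k.
apply: Ekbad.
have s1 := HF0 F0 fF0 (@subset_refl _ F0) F0A.
have fU : finite_set (F0 `|` E k) by rewrite finite_setU.
have UA : F0 `|` E k `<=` A by move=> x [/F0A|/EkA []].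
have s2 := HF0 (F0 `|` E k) fU (@subsetUl _ F0 (E k)) UA.
have := HV _ _ s1 s2.
rewrite fsbigU0 //; last by move=> a [F0a /Fk].
rewrite subsub3; congr U; apply: eq_fsbigr => a /set_mem Eka.
by rewrite (zE k).
Qed.

Lemma ptws_nbhs (f : {ptws G -> G}) (N : set {ptws G -> G}) :
  nbhs f N -> exists S : set G, finite_set S /\
    forall g : {ptws G -> G}, (forall x, S x -> g x = f x) -> N g.
Proof.
pose Fl := filter_from (@finite_set G)
  (fun S => [set g : {ptws G -> G} | forall x, S x -> g x = f x]).
have FF : Filter Fl.
  apply: filter_from_filter; first by exists set0.
  move=> S1 S2 f1 f2; exists (S1 `|` S2); first by rewrite finite_setU.
  by move=> g Hg; split => x Sx; apply: Hg; [left|right].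
suff : Fl --> f.
  by move=> /(_ N) H /H [S fS HS]; exists S; split => // g Hg; apply: HS.
apply/cvg_sup => i.
apply/(@cvg_image _ _ (fun g : G -> G => g i)).
  apply/seteqP; split => // y _; exists (fun _ => y) => //.
move=> P Pfi; exists ((fun g : G -> G => g i) @^-1` P).
  exists [set i]; first exact: finite_set1.
  by move=> g /= Hg; rewrite Hg //; exact: nbhs_singleton.
apply: image_preimage; apply/seteqP; split => // y _; exists (fun _ => y) => //.
Qed.

Lemma ptws_proj_nbhs (f : {ptws G -> G}) (b : G) (O : set G) :
  nbhs (f b) O -> nbhs f [set g : {ptws G -> G} | O (g b)].
Proof.
move=> Ob; have := @proj_continuous G (fun _ => G) b f.
by move=> /(_ O Ob).
Qed.

Section Iso.
Variables (B : set G) (phi : {ptws G -> G} -> G).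
Hypothesis hom : forall f g, PB B f -> PB B g -> phi (f \+ g) = phi f + phi g.

Lemma PB0 : PB B (fun _ => 0).
Proof. by split => // b _; exists 0 => //; rewrite mulr0z. Qed.

Lemma PBD f g : PB B f -> PB B g -> PB B (f \+ g).
Proof.
move=> [f1 f2] [g1 g2]; split => [b Bb|x nBx] /=.
  by apply: (sgD (cyc_subgroup b)); [apply: f1|apply: g1].
by rewrite f2 // g2 // addr0.
Qed.

Lemma PBN f : PB B f -> PB B (fun x => - f x).
Proof.
move=> [f1 f2]; split => [b Bb|x nBx] /=.
  by apply: (sgN (cyc_subgroup b)); apply: f1.
by rewrite f2 // oppr0.
Qed.

Lemma PBMz f m : PB B f -> PB B (fun x => f x *~ m).
Proof.
move=> [f1 f2]; split => [b Bb|x nBx] /=.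
  by apply: (sgMz (cyc_subgroup b)); apply: f1.
by rewrite f2 // mul0rz.
Qed.

Lemma PB_restr f (p : pred G) : PB B f -> PB B (fun x => if p x then f x else 0).
Proof.
move=> [f1 f2]; split => [b Bb|x nBx] /=.
  by case: (p b); [apply: f1 | exact: sg0 (cyc_subgroup b)].
by case: (p x) => //; rewrite f2.
Qed.

Lemma phi0 : phi (fun _ => 0) = 0.
Proof.
have e : (fun _ : G => 0 : G) \+ (fun _ => 0) = (fun _ => 0).
  by apply/funext => x /=; rewrite addr0.
have H := hom PB0 PB0; rewrite e in H.
by have := subrr (phi (fun _ => 0)); rewrite {1}H addrK.
Qed.

Lemma phiN f : PB B f -> phi (fun x => - f x) = - phi f.
Proof.
move=> Pf; have H := hom Pf (PBN Pf).
have e : f \+ (fun x => - f x) = (fun _ => 0) by apply/funext => x /=; rewrite subrr.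
rewrite e phi0 in H; by apply: (@addrI _ (phi f)); rewrite -H subrr.
Qed.

Lemma phiMn f k : PB B f -> phi (fun x => f x *+ k) = phi f *+ k.
Proof.
move=> Pf; elim: k => [|k IH].
  by rewrite mulr0n; under eq_fun do rewrite mulr0n; exact: phi0.
have e : (fun x => f x *+ k.+1) = f \+ (fun x => f x *+ k).
  by apply/funext => x /=; rewrite mulrS.
rewrite e hom // ?IH ?mulrS //.
have -> : (fun x => f x *+ k) = (fun x => f x *~ k) by [].
exact: PBMz.
Qed.

Lemma phiMz f m : PB B f -> phi (fun x => f x *~ m) = phi f *~ m.
Proof.
move=> Pf; case: m => k; first exact: phiMn.
rewrite NegzE mulrNz.
have -> : (fun x => f x *~ - (Posz k.+1)) = (fun x => - (f x *+ k.+1)).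
  by apply/funext => x; rewrite mulrNz.
rewrite phiN; first by rewrite phiMn.
have -> : (fun x => f x *+ k.+1) = (fun x => f x *~ k.+1) by [].
exact: PBMz.
Qed.

Lemma phi_seq f (s : seq G) : PB B f -> uniq s ->
  phi (fun x => if x \in s then f x else 0) =
  \sum_(b <- s) phi (fun x => if x == b then f x else 0).
Proof.
move=> Pf; elim: s => [|b s IH] /=.
  by move=> _; rewrite big_nil; exact: phi0.
move=> /andP [bs us]; rewrite big_cons -IH //.
have e : (fun x => if x \in b :: s then f x else 0) =
   (fun x => if x == b then f x else 0) \+ (fun x => if x \in s then f x else 0).
  apply/funext => x /=; rewrite in_cons; case: (eqVneq x b) => [->|_] /=.
    by rewrite (negbTE bs) addr0.
  by rewrite add0r.
by rewrite e hom //; apply: PB_restr.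
Qed.

End Iso.


Lemma iso_to_summable (B : set G) (phi : {ptws G -> G} -> G) :
  infinite_set B -> top_iso_onto_subgroup B phi ->
  exists A : set G, infinite_set A /\ abs_summable A.
Proof.
move=> iB [hom inj cont _].
pose B0 := B `\ (0:G).
pose d := fun b : G => ((fun x : G => if x == b then b else 0) : {ptws G -> G}).
pose io := fun b => phi (d b).
have PBd : forall b, B b -> PB B (d b).
  move=> b Bb; split => [c Bc|x nBx]; rewrite /d.
    case: (eqVneq c b) => [->|_]; first by exists 1 => //; rewrite mulr1z.
    exact: sg0 (cyc_subgroup c).
  by case: (eqVneq x b) => // exb; case: nBx; rewrite exb.
have io_inj : {in B0 &, injective io}.
  move=> b1 b2 /set_mem [Bb1 nb1] /set_mem [Bb2 _] /(inj _ _ (PBd _ Bb1) (PBd _ Bb2)) e.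
  have := congr1 (fun h : {ptws G -> G} => h b1) e; rewrite /d /= eqxx.
  by case: (eqVneq b1 b2) => // _ b10; case: nb1.
exists (io @` B0); split.
  rewrite (eq_finite_set (inj_card_eq io_inj)).
  by apply: infinite_setD => //; exact: finite_set1.
move=> z.
pose f := ((fun x : G => if x \in B0 then x *~ z (io x) else 0) : {ptws G -> G}).
have PBf : PB B f.
  split => [b Bb|x nBx]; rewrite /f.
    by case: ifP => _; [exists (z (io b)) | exact: sg0 (cyc_subgroup b)].
  by rewrite ifF //; apply/negP => /set_mem [].
exists (phi f) => U U0.
have Nt := nbhs_transl (phi f) U0.
have /subspace_continuousP cf := cont.
have := cf f PBf _ Nt; rewrite /= nbhs_simpl /within /= => Nf.
have [S [fS HS]] := ptws_nbhs Nf.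
exists (io @` (S `&` B0)); split.
- by apply: finite_image; apply: finite_setIl.
- by move=> _ [b [_ Bb] <-]; exists b.
move=> E fE FE EA.
pose D := [set b | B0 b /\ E (io b)].
have ED : E = io @` D.
  apply/seteqP; split; last by move=> _ [b [_ Eb] <-].
  by move=> a Ea; have [b Bb ab] := EA a Ea; exists b => //; split => //; rewrite ab.
have ioD : {in D &, injective io}.
  by move=> x y /set_mem [Dx _] /set_mem [Dy _]; apply: io_inj; apply/mem_set.
have fD : finite_set D by rewrite -(eq_finite_set (inj_card_eq ioD)) -ED.
pose s : seq G := finmap.enum_fset (fset_set D).
have sD : forall x, (x \in s) = (x \in D) by move=> x; rewrite -(in_fset_set fD).
pose g := ((fun x : G => if x \in s then f x else 0) : {ptws G -> G}).
have -> : \sum_(a \in E) a *~ z a = phi g.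
  rewrite ED fsbig_image // fsbig_finite // /g (phi_seq hom) //; last exact: finmap.fset_uniq.
  apply: eq_big_seq => b; rewrite sD inE => -[B0b _].
  have -> : (fun x => if x == b then f x else 0) = (fun x => d b x *~ z (io b)).
    apply/funext => x; rewrite /d; case: (eqVneq x b) => [->|_]; last by rewrite mul0rz.
    by rewrite /f ifT //; apply/mem_set.
  by rewrite (phiMz hom) //; case: B0b => Bb _; apply: PBd.
apply: HS; last by apply: PB_restr.
move=> x Sx; rewrite /g; case: ifP => // /negP nD.
rewrite /f ifF //; apply/negP => /set_mem B0x; apply: nD.
rewrite sD inE; split => //; apply: FE; exists x => //.
Qed.


Section Construction.
Variable A : set G.
Hypothesis hG : hausdorff_space G.
Hypothesis dG : cyclic_subgroups_discrete G.
Hypothesis iA : infinite_set A.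
Hypothesis sA : abs_summable A.
Let cA : abs_cauchy_summable A := summable_to_cauchy sA.

Definition step_prop (C : set G) (p : G * set G * set G) :=
  [/\ A p.1.1, ~ C p.1.1, nbhs (0:G) p.1.2,
      (forall x y w, p.1.2 x -> p.1.2 y -> p.1.2 w ->
         cyclic_sub p.1.1 (x - (y + w)) -> x - (y + w) = 0) &
      [/\ finite_set p.2, p.2 `<=` A & gen_subgroup (A `\` p.2) `<=` p.1.2]].

Lemma step_ex : forall C : set G, exists p, finite_set C -> step_prop C p.
Proof.
move=> C; case: (pselect (finite_set C)); last first.
  by move=> nC; exists (0, set0, set0).
move=> fC.
have [b [Ab nCb]] : (A `\` C) !=set0 by apply: infinite_setN0; exact: infinite_setD.
have [U [oU UE]] := dG (sg0 (cyc_subgroup b)).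
have U0 : nbhs (0:G) U.
  apply: open_nbhs_nbhs; split => //.
  by have [] : (U `&` cyclic_sub b) 0 by rewrite UE.
have [V1 [V10 HV1]] := nbhs0_sub U0.
have [V2 [V20 HV2]] := nbhs0_add V10.
have [F [fF FA HF]] := cA (filterI V10 V20).
exists (b, V1 `&` V2, F) => _; split => //=.
- exact: filterI.
- move=> x y w [x1 _] [_ y2] [_ w2] cb.
  have : (U `&` cyclic_sub b) (x - (y + w)) by split => //; apply: HV1 => //; apply: HV2.
  by rewrite UE.
Qed.

Definition step : set G -> G * set G * set G := projT1 (boolp.choice step_ex).
Lemma stepP C : finite_set C -> step_prop C (step C).
Proof. exact: (projT2 (boolp.choice step_ex) C). Qed.

Fixpoint cum (k : nat) : set G :=
  if k is k'.+1 then cum k' `|` [set (step (cum k')).1.1] `|` (step (cum k')).2 else set0.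

Definition bs k := (step (cum k)).1.1.
Definition Vs k := (step (cum k)).1.2.
Definition Fs k := (step (cum k)).2.

Lemma cum_fin k : finite_set (cum k) /\ cum k `<=` A.
Proof.
elim: k => [|k [fk kA]] /=; first by split.
have [Ab _ _ _ [fF FA _]] := stepP fk.
split; first by rewrite !finite_setU; split => //; split => //; exact: finite_set1.
by move=> x [[/kA|->]|/FA].
Qed.

Lemma bsP k : [/\ A (bs k), ~ cum k (bs k), nbhs (0:G) (Vs k),
      (forall x y w, Vs k x -> Vs k y -> Vs k w ->
         cyclic_sub (bs k) (x - (y + w)) -> x - (y + w) = 0) &
      [/\ finite_set (Fs k), Fs k `<=` A & gen_subgroup (A `\` Fs k) `<=` Vs k]].
Proof. exact: (stepP (cum_fin k).1). Qed.

Lemma cum_mono j k : (j <= k)%N -> cum j `<=` cum k.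
Proof.
move=> jk; rewrite -(subnK jk); elim: (k - j)%N => [|i IH] //.
by rewrite addSn => x /IH; left; left.
Qed.

Lemma bs_cum j k : (j < k)%N -> cum k (bs j).
Proof. by move=> jk; apply: (cum_mono jk) => /=; left; right. Qed.

Lemma Fs_cum j k : (j < k)%N -> Fs j `<=` cum k.
Proof. by move=> jk x Fx; apply: (cum_mono jk) => /=; right. Qed.

Lemma bs_inj : injective bs.
Proof.
move=> j k e; case: (ltngtP j k) => // jk.
  by have [_ nc _ _ _] := bsP k; case: nc; rewrite -e; apply: bs_cum.
by have [_ nc _ _ _] := bsP j; case: nc; rewrite e; apply: bs_cum.
Qed.

Definition Bs := range bs.

Lemma Bs_inf : infinite_set Bs.
Proof.
rewrite /Bs (eq_finite_set (@inj_card_eq _ _ [set: nat] bs _)); first exact: infinite_nat.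
by move=> x y _ _ /bs_inj.
Qed.

Lemma Bs_A : Bs `<=` A.
Proof. by move=> _ [k _ <-]; case: (bsP k). Qed.

Lemma Fs_Bs k j : Fs k (bs j) -> (j <= k)%N.
Proof.
move=> Fj; rewrite leqNgt; apply/negP => kj.
have [_ nc _ _ _] := bsP j; apply: nc; exact: (Fs_cum kj).
Qed.


Definition phiB (f : {ptws G -> G}) : G :=
  if pselect (exists g, sumsA A f g) is left h then projT1 (cid h) else 0.

Lemma PB_sums f : PB Bs f -> sumsA A f (phiB f).
Proof.
move=> [f1 f2].
have hz : forall a, exists n : int, f a = a *~ n.
  move=> a; case: (pselect (Bs a)) => [Ba|nBa].
    by have [n _ <-] := f1 a Ba; exists n.
  by exists 0; rewrite f2 // mulr0z.
have [z Hz] := boolp.choice hz.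
have [g sg] := sA z.
have sf : sumsA A f g by apply: sumsA_ext sg => a _; rewrite Hz.
rewrite /phiB; case: pselect => [h|]; last by case; exists g.
by case: cid.
Qed.

Lemma phiB_eq f g : PB Bs f -> sumsA A f g -> phiB f = g.
Proof. by move=> Pf sg; apply: (sumsA_uniq hG (PB_sums Pf) sg). Qed.

Lemma phiB_hom f g : PB Bs f -> PB Bs g -> phiB (f \+ g) = phiB f + phiB g.
Proof.
move=> Pf Pg; apply: phiB_eq; first exact: PBD.
exact: sumsA_add (PB_sums Pf) (PB_sums Pg).
Qed.

Lemma phiB_single f k : PB Bs f ->
  phiB (fun x => if x == bs k then f x else 0) = f (bs k).
Proof.
move=> Pf; apply: phiB_eq; first exact: PB_restr.
move=> U U0; exists [set bs k]; split.
- exact: finite_set1.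
- by move=> x ->; case: (bsP k).
move=> E fE kE EA.
rewrite -(fsbig_widen [set bs k]) //; last first.
  by move=> x [_ /= nx]; rewrite ifF //; apply/negP => /eqP.
by rewrite fsbig_set1 eqxx subrr; exact: nbhs_singleton.
Qed.

Lemma tail f (F V : set G) : PB Bs f -> gen_subgroup (A `\` F) `<=` V ->
  (forall a, F a -> f a = 0) -> nbhs (0:G) V ->
  exists v1 v2, [/\ V v1, V v2 & phiB f = v1 + v2].
Proof.
move=> [f1 f2] gV fF V0.
have [F0 [fF0 F0A H0]] := PB_sums (conj f1 f2) V0.
have H := H0 F0 fF0 (@subset_refl _ F0) F0A.
exists (phiB f - \sum_(a \in F0) f a), (\sum_(a \in F0) f a); split => //.
  apply: gV; apply: sg_sum => //; first exact: gen_is_subgroup.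
  move=> a F0a; case: (pselect (F a)) => [Fa|nFa].
    by rewrite fF //; exact: sg0 (gen_is_subgroup _).
  case: (pselect (Bs a)) => [Ba|nBa].
    by apply: (@cyc_in_gen _ a) => //; [split => //; apply: F0A | apply: f1].
  by rewrite f2 //; exact: sg0 (gen_is_subgroup _).
by rewrite subrK.
Qed.

Lemma first_zero h k : PB Bs h -> (forall j, (j < k)%N -> h (bs j) = 0) ->
  Vs k (phiB h) -> h (bs k) = 0.
Proof.
move=> Ph hj Vh.
pose h' := ((fun x => if x == bs k then 0 else h x) : {ptws G -> G}).
pose dl := ((fun x => if x == bs k then h x else 0) : {ptws G -> G}).
have Ph' : PB Bs h'.
  have -> : h' = (fun x => if ~~ (x == bs k) then h x else 0).
    by apply/funext => x; rewrite /h'; case: (x == bs k).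
  exact: PB_restr.
have e : h = dl \+ h'.
  by apply/funext => x; rewrite /dl /h' /=; case: (x == bs k); rewrite ?addr0 ?add0r.
have [_ _ V0 key [_ _ gV]] := bsP k.
have [v1 [v2 [V1 V2 e2]]] : exists v1 v2, [/\ Vs k v1, Vs k v2 & phiB h' = v1 + v2].
  apply: (tail Ph' gV _ V0) => a Fa; rewrite /h'; case: (eqVneq a (bs k)) => // nak.
  case: (pselect (Bs a)) => [[j _ ja]|nBa]; last by case: Ph => _ h2; rewrite h2.
  rewrite -ja; apply: hj; rewrite ltn_neqAle Fs_Bs ?andbT; last by rewrite ja.
  by apply/negP => /eqP jk; move: nak; rewrite -ja jk eqxx.
have Hb : h (bs k) = phiB h - (v1 + v2).
  by rewrite {2}e phiB_hom //; [rewrite phiB_single // e2 addrK | exact: PB_restr].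
rewrite Hb; apply: key => //; rewrite -Hb.
by case: Ph => + _; apply; exists k.
Qed.

Lemma upto_zero h M : PB Bs h -> (forall k, (k <= M)%N -> Vs k (phiB h)) ->
  forall k, (k <= M)%N -> h (bs k) = 0.
Proof.
move=> Ph HV.
suff : forall k, (k <= M.+1)%N -> forall j, (j < k)%N -> h (bs j) = 0.
  by move=> H k kM; apply: (H k.+1).
elim => [|k IH] // kM j; rewrite ltnS leq_eqVlt => /orP [/eqP ->|jk].
  apply: first_zero => //; first by apply: IH; apply: ltnW.
  by apply: HV.
by apply: IH => //; apply: ltnW.
Qed.


Lemma phiB_sub f g : PB Bs f -> PB Bs g ->
  phiB (fun x => g x - f x) = phiB g - phiB f.
Proof.
move=> Pf Pg; have -> : (fun x => g x - f x) = g \+ (fun x => - f x) by [].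
by rewrite phiB_hom //; [rewrite (phiN phiB_hom) | apply: PBN].
Qed.

Lemma PB_sub f g : PB Bs f -> PB Bs g -> PB Bs (fun x => g x - f x).
Proof. by move=> Pf Pg; apply: PBD => //; apply: PBN. Qed.

Lemma agree_eq f g : PB Bs f -> PB Bs g -> (forall k, g (bs k) = f (bs k)) -> g = f.
Proof.
move=> [f1 f2] [g1 g2] e; apply/funext => x.
case: (pselect (Bs x)) => [[k _ <-]|nB]; first exact: e.
by rewrite f2 // g2.
Qed.

Lemma phiB_inj f g : PB Bs f -> PB Bs g -> phiB f = phiB g -> f = g.
Proof.
move=> Pf Pg e; apply/esym; apply: agree_eq => // k.
have := @upto_zero _ k (PB_sub Pf Pg); rewrite phiB_sub // e subrr => H.
apply/eqP; rewrite -subr_eq0; apply/eqP; apply: H => // j _.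
by case: (bsP j) => _ _ V0 _ _; exact: nbhs_singleton.
Qed.

Lemma filter_seq (T : Type) (F : set_system T) (P : G -> set T) :
  Filter F -> forall s : seq G, (forall x, x \in s -> F (P x)) ->
  F (fun g => forall x, x \in s -> P x g).
Proof.
move=> FF; elim => [|a s IH] H.
  by apply: filterS filterT => g _ x.
apply: filterS (filterI (H a (mem_head a s)) (IH _)) => [g [Pa Ps] x|].
  by rewrite in_cons => /orP [/eqP ->|/Ps].
by move=> x xs; apply: H; rewrite in_cons xs orbT.
Qed.

Lemma phiB_cont : {within PB Bs, continuous phiB}.
Proof.
apply/subspace_continuousP => f Pf P nP.
rewrite nbhs_simpl /within /=.
have [W' [W0 HW]] := nbhs0_add (nbhs_trans0 nP).
have [F [fF FA gW]] := cA W0.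
have hO : forall x, exists Ob : set G,
    Bs x -> open Ob /\ Ob `&` cyclic_sub x = [set f x].
  move=> x; case: (pselect (Bs x)) => [Bx|nBx]; last by exists set0.
  have [Ob [oO OE]] := dG (Pf.1 x Bx); by exists Ob.
have [Ox HOx] := boolp.choice hO.
have fFB : finite_set (F `&` Bs) by apply: finite_setIl.
pose sF : seq G := finmap.enum_fset (fset_set (F `&` Bs)).
have sFE : forall x, (x \in sF) = (x \in F `&` Bs) by move=> x; rewrite -(in_fset_set fFB).
have nN : nbhs f (fun g : {ptws G -> G} => forall x, x \in sF -> Ox x (g x)).
  apply: filter_seq => x; rewrite sFE inE => -[_ Bx].
  apply: ptws_proj_nbhs; have [oO OE] := HOx x Bx.
  apply: open_nbhs_nbhs; split => //.
  by have [] : (Ox x `&` cyclic_sub x) (f x) by rewrite OE.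
apply: filterS nN => g Ng Pg.
pose h := ((fun x => g x - f x) : {ptws G -> G}).
have Ph : PB Bs h by apply: PB_sub.
have [v1 [v2 [V1 V2 e]]] : exists v1 v2, [/\ W' v1, W' v2 & phiB h = v1 + v2].
  apply: (tail Ph gW _ W0) => a Fa; rewrite /h.
  case: (pselect (Bs a)) => [Ba|nBa]; last by rewrite Pf.2 // Pg.2 // subrr.
  have [_ OE] := HOx a Ba.
  have : (Ox a `&` cyclic_sub a) (g a).
    split; last exact: Pg.1.
    by apply: Ng; rewrite sFE inE.
  by rewrite OE /= => ->; rewrite subrr.
rewrite /from_subspace in HW *.
rewrite /preimage /=.
have -> : phiB g = phiB f + phiB h by rewrite phiB_sub // addrC subrK.
by rewrite e; apply: HW.
Qed.

Definition psiB (y : G) : {ptws G -> G} :=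
  if pselect (exists f, PB Bs f /\ phiB f = y) is left h then projT1 (cid h)
  else (fun _ => 0).

Lemma psiBK f : PB Bs f -> psiB (phiB f) = f.
Proof.
move=> Pf; rewrite /psiB; case: pselect => [h|]; last by case; exists f.
by case: cid => g [Pg e]; apply: phiB_inj.
Qed.

Lemma bound_fin (T : set G) : finite_set T -> T `<=` Bs ->
  exists M, forall x, T x -> exists k, (k <= M)%N /\ x = bs k.
Proof.
move=> fT TB.
suff : forall s : seq G, (forall x, x \in s -> Bs x) ->
    exists M, forall x, x \in s -> exists k, (k <= M)%N /\ x = bs k.
  have sT : forall x, (x \in finmap.enum_fset (fset_set T)) = (x \in T).
    by move=> x; rewrite -(in_fset_set fT).
  move=> /(_ (finmap.enum_fset (fset_set T))) [].
    by move=> x; rewrite sT inE => /TB.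
  move=> M HM; exists M => x Tx; apply: HM.
  by rewrite sT inE.
elim => [|a s IH] Hs; first by exists 0%N.
have [M HM] : exists M, forall x, x \in s -> exists k, (k <= M)%N /\ x = bs k.
  by apply: IH => x xs; apply: Hs; rewrite in_cons xs orbT.
have [ka _ <-] := Hs a (mem_head a s).
exists (maxn M ka) => x; rewrite in_cons => /orP [/eqP ->|xs].
  by exists ka; rewrite leq_maxr.
have [k [kM ->]] := HM x xs; exists k; split => //.
by apply: leq_trans kM _; rewrite leq_maxl.
Qed.

Lemma Vs_upto M : nbhs (0:G) (fun d => forall k, (k <= M)%N -> Vs k d).
Proof.
elim: M => [|M IH].
  have [_ _ V0 _ _] := bsP 0; apply: filterS V0 => d Vd k.
  by rewrite leqn0 => /eqP ->.
have [_ _ V0 _ _] := bsP M.+1.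
apply: filterS (filterI IH V0) => d [H1 H2] k; rewrite leq_eqVlt => /orP [/eqP ->|] //.
by rewrite ltnS; apply: H1.
Qed.

Lemma psiB_cont : {within phiB @` PB Bs, continuous psiB}.
Proof.
apply/subspace_continuousP => _ [f Pf <-] N; rewrite /from_subspace /= psiBK // => nN.
have [S [fS HS]] := ptws_nbhs nN.
have [M HM] := @bound_fin (S `&` Bs) (finite_setIl _ fS) (@subIsetr _ S Bs).
rewrite nbhs_simpl /within /=.
apply: filterS (nbhs_transx (phiB f) (Vs_upto M)) => y Z [g Pg gy]; move: Z; rewrite -gy => Z.
rewrite /preimage /= psiBK //; apply: HS => x Sx.
case: (pselect (Bs x)) => [Bx|nBx]; last by rewrite Pf.2 // Pg.2.
have [k [kM ->]] := HM x (conj Sx Bx).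
have := @upto_zero _ M (PB_sub Pf Pg); rewrite phiB_sub // => H.
by apply/eqP; rewrite -subr_eq0; apply/eqP; apply: H.
Qed.

Lemma summable_to_iso : exists (B : set G) (phi : {ptws G -> G} -> G),
  infinite_set B /\ top_iso_onto_subgroup B phi.
Proof.
exists Bs, phiB; split; first exact: Bs_inf.
split.
- exact: phiB_hom.
- exact: phiB_inj.
- exact: phiB_cont.
by exists psiB; split; [exact: psiBK | exact: psiB_cont].
Qed.

End Construction.

End Basic.

Unset Implicit Arguments.

Theorem corollary7p4 (G : topologicalZmodType) :
  hausdorff_space G -> cyclic_subgroups_discrete G ->
  ((exists A : set G, infinite_set A /\ abs_summable A) <->
   (exists (B : set G) (phi : {ptws G -> G} -> G),
      infinite_set B /\ top_iso_onto_subgroup B phi)) /\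
  (group_complete G ->
   ((exists A : set G, infinite_set A /\ abs_summable A) <->
    (exists A : set G, infinite_set A /\ abs_cauchy_summable A))).
Proof.
move=> hG dG; split.
  split.
    by move=> [A [iA sA]]; exact: (summable_to_iso hG dG iA sA).
  by move=> [B [phi [iB iso]]]; exact: (iso_to_summable iB iso).
move=> cG; split.
  by move=> [A [iA sA]]; exists A; split => //; exact: summable_to_cauchy.
by move=> [A [iA cA]]; exists A; split => //; exact: cauchy_to_summable.
Qed.
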